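(* Suppose $d=1$ and let $\lambda\in\mathbb R$. Then $L,(L^*+\lambda)^2$ is a Leonard pair on $\mathcal P_d(\mathbb R)$ if and only if $2\lambda\neq-1$.
   Context: Let $r,s\in(-1,\infty)$. Write $(x)_i=x(x+1)\cdots(x+i-1)$, $(x)_0=1$. For $0\le i\le d$ put $\theta_i=(d-i)(d-i+r+s+1)$ (distinct) and $\theta^*_i=i$. Put $b^*_i=\frac{(d-i)(i-d-s)(2d-2i+r+s+2)_i}{(2d-2i+r+s)_{i+1}}$ ($0\le i\le d-1$), $c^*_i=\frac{i(i-d-r-1)(d-i+r+s+1)_{d-i}}{(d-i+r+s+2)_{d-i+1}}$ ($1\le i\le d$), $b^*_d=c^*_0=0$, and $a^*_i=\theta^*_0-b^*_i-c^*_i$. Let $\mathcal P_d(\mathbb R)$ be the real polynomials of degree at most $d$, each determined by its values at $\theta_0,\dots,\theta_d$. Let $L,L^*$ be the linear maps on $\mathcal P_d(\mathbb R)$ with $(Lf)(\theta_i)=\theta_i f(\theta_i)$ and $(L^*f)(\theta_i)=b^*_i f(\theta_{i+1})+a^*_i f(\theta_i)+c^*_i f(\theta_{i-1})$ ($0\le i\le d$; terms with coefficient $b^*_d$ or $c^*_0$ omitted); $\lambda$ stands for $\lambda$ times the identity. A square matrix is irreducible tridiagonal if its nonzero entries lie on the diagonal, subdiagonal or superdiagonal and all subdiagonal and superdiagonal entries are nonzero. A Leonard pair on a nonzero finite-dimensional vector space $V$ is an ordered pair $A,A^*$ of linear maps on $V$ such that there is an ordered basis in which $A$ is diagonal and $A^*$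 is irreducible tridiagonal, and there is an ordered basis in which $A^*$ is diagonal and $A$ is irreducible tridiagonal. *)

(* Defs.v *)
From HB Require Import structures.
From mathcomp Require Import all_boot all_order all_algebra.
From mathcomp Require Import reals.
Set Implicit Arguments. Unset Strict Implicit. Unset Printing Implicit Defensive.
Import Order.TTheory GRing.Theory Num.Theory.
Local Open Scope ring_scope.

Definition irr_tridiag (K : fieldType) (n : nat) (M : 'M[K]_n) : Prop :=
  forall i j : 'I_n,
    (((i.+1 < j)%N || (j.+1 < i)%N) -> M i j = 0) /\
    (((i.+1 == j)%N || (j.+1 == i)%N) -> M i j != 0).

Definition leonard_pair (K : fieldType) (V : vectType K) (A As : 'End(V)) : Prop :=
  (0 < \dim {:V})%N /\
  (exists e : (\dim {:V}).-tuple V,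
      basis_of fullv e /\ is_diag_mx (passmx.mxof e e A) /\ irr_tridiag (passmx.mxof e e As)) /\
  (exists e : (\dim {:V}).-tuple V,
      basis_of fullv e /\ is_diag_mx (passmx.mxof e e As) /\ irr_tridiag (passmx.mxof e e A)).

Section Data.
Variables (R : realType) (r s : R) (d : nat).

Definition poch (x : R) (i : nat) : R := \prod_(k < i) (x + k%:R).

Definition theta (i : nat) : R :=
  (d%:R - i%:R) * (d%:R - i%:R + r + s + 1).
Definition thetas (i : nat) : R := i%:R.

Definition bs (i : nat) : R :=
  if (i < d)%N then
    (d%:R - i%:R) * (i%:R - d%:R - s)
      * poch (2 * d%:R - 2 * i%:R + r + s + 2) i
      / poch (2 * d%:R - 2 * i%:R + r + s) i.+1
  else 0.

Definition cs (i : nat) : R :=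
  if (0 < i)%N then
    i%:R * (i%:R - d%:R - r - 1)
      * poch (d%:R - i%:R + r + s + 1) (d - i)
      / poch (d%:R - i%:R + r + s + 2) (d - i).+1
  else 0.

Definition as_ (i : nat) : R := thetas 0 - bs i - cs i.

(* P_d(R): real polynomials of degree at most d *)
Definition Pd := {poly_(d.+1) R}.

Definition interp (v : nat -> R) : Pd :=
  npolyp d.+1 (\sum_(i < d.+1) v i *:
     \prod_(j < d.+1 | j != i) ((theta i - theta j)^-1 *: ('X - (theta j)%:P))).

Definition Lop : 'End(Pd) :=
  linfun (fun f : Pd => interp (fun i => theta i * (polyn f).[theta i])).

Definition Lsop : 'End(Pd) :=
  linfun (fun f : Pd => interp (fun i =>
     (if (i < d)%N then bs i * (polyn f).[theta i.+1] else 0)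
     + as_ i * (polyn f).[theta i]
     + (if (0 < i)%N then cs i * (polyn f).[theta i.-1] else 0))).

End Data.

(* Main.v *)
Require Import Defs.
From HB Require Import structures.
From mathcomp Require Import all_boot all_order all_algebra.
From mathcomp Require Import reals.
From mathcomp Require Import ring lra.
Import Order.TTheory GRing.Theory Num.Theory.
Local Open Scope ring_scope.

Lemma linfunE' (K : fieldType) (aT rT : vectType K) (f : aT -> rT) (fL : linear f) v :
  linfun f v = f v.
Proof.
pose F : {linear aT -> rT} :=
  HB.pack f (GRing.isSemilinear.Build K aT rT _ f (GRing.semilinear_linear fL)).
exact: (lfunE F v).
Qed.

Section S.
Variables (R : realType) (r s : R).
Hypotheses (hr : -1 < r) (hs : -1 < s).
Local Notation N := (r + s + 2).
Lemma N_gt0 : 0 < N. Proof. move: hr hs => ? ?; lra. Qed.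
Lemma N_neq0 : N != 0. Proof. by rewrite gt_eqF // N_gt0. Qed.
Lemma theta0 : theta r s 1 0 = N. Proof. rewrite /theta /=. ring. Qed.
Lemma theta1 : theta r s 1 1 = 0. Proof. rewrite /theta /=. ring. Qed.

Definition ev k (f : Pd R 1) : R := (polyn f).[theta r s 1 k].

Lemma interp_val (v : nat -> R) :
  polyn (interp r s 1 v) = (v 1%N)%:P + ((v 0%N - v 1%N) / N) *: 'X.
Proof.
have E : (\sum_(i < 2) v i *: \prod_(j < 2 | j != i)
     ((theta r s 1 i - theta r s 1 j)^-1 *: ('X - (theta r s 1 j)%:P)))
   = (v 1%N)%:P + ((v 0%N - v 1%N) / N) *: 'X.
  rewrite (big_ord_recl 1) big_ord1 /=.
  rewrite big_mkcond big_ord_recl big_ord1 /=.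
  rewrite big_mkcond big_ord_recl big_ord1 /=.
  rewrite !mul1r !mulr1 theta0 theta1.
  apply/polyP=> i; rewrite !(coefD, coefZ, coefN, coefX, coefC) /bump /=.
  have hN := N_neq0.
  by case: i => [|[|i]] /=; field.
rewrite /interp E npolypK //.
rewrite (leq_trans (size_polyD _ _)) // geq_max (leq_trans (size_polyC_leq1 _)) //.
by rewrite (leq_trans (size_scale_leq _ _)) // size_polyX.
Qed.

Lemma ev_interp0 v : ev 0 (interp r s 1 v) = v 0%N.
Proof.
have hN := N_neq0.
by rewrite /ev interp_val theta0 hornerD hornerC hornerZ hornerX; field.
Qed.
Lemma ev_interp1 v : ev 1 (interp r s 1 v) = v 1%N.
Proof.
by rewrite /ev interp_val theta1 hornerD hornerC hornerZ hornerX mulr0 addr0.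
Qed.
Lemma evD k f g : ev k (f + g) = ev k f + ev k g.
Proof. by rewrite /ev raddfD /= hornerD. Qed.
Lemma evZ k a f : ev k (a *: f) = a * ev k f.
Proof. by rewrite /ev linearZ /= hornerZ. Qed.
Lemma evN k f : ev k (- f) = - ev k f.
Proof. by rewrite /ev raddfN /= hornerN. Qed.

Lemma ev_inj f g : ev 0 f = ev 0 g -> ev 1 f = ev 1 g -> f = g.
Proof.
move=> e0 e1; apply/val_inj => /=.
apply/eqP; rewrite -subr_eq0; apply/eqP.
set p := (polyn f - polyn g).
have sp : (size p <= 2)%N.
  by rewrite (leq_trans (size_polyD _ _)) // geq_max size_polyN !size_npoly.
have h0 : p.[theta r s 1 0] = 0 by rewrite hornerD hornerN -/(ev 0 f) -/(ev 0 g) e0 subrr.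
have h1 : p.[theta r s 1 1] = 0 by rewrite hornerD hornerN -/(ev 1 f) -/(ev 1 g) e1 subrr.
rewrite (horner_coef_wide _ sp) !big_ord_recl big_ord0 theta1 /= in h1.
rewrite (horner_coef_wide _ sp) !big_ord_recl big_ord0 theta0 /= in h0.
rewrite /bump /= expr0 expr1 mulr1 mulr0 !addr0 in h1 h0.
rewrite expr1 h1 add0r in h0.
have hN := N_neq0.
have h1' : p`_1 = 0.
  by move/eqP: h0; rewrite mulf_eq0 (negPf hN) orbF => /eqP.
apply/polyP => -[|[|i]]; rewrite coef0 //.
by rewrite nth_default // (leq_trans sp).
Qed.


Lemma bs0 : bs r s 1 0 = -(1+s)/N.
Proof.
have hN := N_neq0.
rewrite /bs /poch /= big_ord0 big_ord1 /=.
have -> : 2 * 1%:R - 2 * 0%:R + r + s + 0%:R = N :> R by ring.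
by field.
Qed.
Lemma bs1 : bs r s 1 1 = 0. Proof. by []. Qed.
Lemma cs0 : cs r s 1 0 = 0. Proof. by []. Qed.
Lemma cs1 : cs r s 1 1 = -(1+r)/N.
Proof.
have hN := N_neq0.
rewrite /cs /poch /= big_ord0 big_ord1 /=.
have -> : 1%:R - 1%:R + r + s + 2 + 0%:R = N :> R by ring.
by field.
Qed.
Lemma as0 : as_ r s 1 0 = (1+s)/N.
Proof. rewrite /as_ bs0 cs0 /thetas; ring. Qed.
Lemma as1 : as_ r s 1 1 = (1+r)/N.
Proof. rewrite /as_ bs1 cs1 /thetas; ring. Qed.

Lemma evE k f : (polyn f).[theta r s 1 k] = ev k f. Proof. by []. Qed.

Lemma Lop_lin : linear (fun f : Pd R 1 => interp r s 1 (fun i => theta r s 1 i * (polyn f).[theta r s 1 i])).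
Proof.
move=> a u w; apply: ev_inj;
  by rewrite evD evZ !(ev_interp0, ev_interp1) !evE evD evZ; ring.
Qed.

Lemma evL0 f : ev 0 (Lop r s 1 f) = N * ev 0 f.
Proof. by rewrite /Lop linfunE' ?ev_interp0 ?evE ?theta0 //; apply: Lop_lin. Qed.
Lemma evL1 f : ev 1 (Lop r s 1 f) = 0.
Proof. by rewrite /Lop linfunE' ?ev_interp1 ?theta1 ?mul0r //; apply: Lop_lin. Qed.


Lemma Lsop_lin : linear (fun f : Pd R 1 => interp r s 1 (fun i =>
     (if (i < 1)%N then bs r s 1 i * (polyn f).[theta r s 1 i.+1] else 0)
     + as_ r s 1 i * (polyn f).[theta r s 1 i]
     + (if (0 < i)%N then cs r s 1 i * (polyn f).[theta r s 1 i.-1] else 0))).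
Proof.
move=> a u w; apply: ev_inj;
  by rewrite evD evZ !(ev_interp0, ev_interp1) /= !hornerD !hornerZ; ring.
Qed.

Lemma evLs0 f : ev 0 (Lsop r s 1 f) = (1+s)/N * (ev 0 f - ev 1 f).
Proof.
rewrite /Lsop linfunE'; last exact: Lsop_lin.
rewrite ev_interp0 /= !evE bs0 as0; ring.
Qed.
Lemma evLs1 f : ev 1 (Lsop r s 1 f) = (1+r)/N * (ev 1 f - ev 0 f).
Proof.
rewrite /Lsop linfunE'; last exact: Lsop_lin.
rewrite ev_interp1 /= !evE cs1 as1; ring.
Qed.


Lemma dimPd : \dim {:Pd R 1} = 2%N.
Proof. exact: dim_polyn. Qed.

Local Notation n := (\dim {:Pd R 1}).

Lemma size2 (u0 u1 : Pd R 1) : size [:: u0; u1] == n.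
Proof. by rewrite dimPd. Qed.

Definition tup2 (u0 u1 : Pd R 1) : n.-tuple (Pd R 1) := Tuple (size2 u0 u1).

Definition mkv (a b : R) := interp r s 1 (fun i => if i == 0%N then a else b).
Lemma ev_mkv0 a b : ev 0 (mkv a b) = a. Proof. by rewrite /mkv ev_interp0. Qed.
Lemma ev_mkv1 a b : ev 1 (mkv a b) = b. Proof. by rewrite /mkv ev_interp1. Qed.

Lemma basis2 (u0 u1 : Pd R 1) : ev 0 u0 * ev 1 u1 - ev 1 u0 * ev 0 u1 != 0 ->
  basis_of fullv (tup2 u0 u1).
Proof.
move=> hdet; rewrite basisEdim size_tuple leqnn andbT.
apply/subvP => v _.
set D := ev 0 u0 * ev 1 u1 - ev 1 u0 * ev 0 u1.
have -> : v = ((ev 0 v * ev 1 u1 - ev 1 v * ev 0 u1) / D) *: u0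
             + ((ev 0 u0 * ev 1 v - ev 1 u0 * ev 0 v) / D) *: u1.
  apply: ev_inj; rewrite evD !evZ /D; by field.
by rewrite memvD // memvZ // memv_span // !inE eqxx ?orbT.
Qed.

Lemma mxofE (e : n.-tuple (Pd R 1)) (F : 'End(Pd R 1)) (i j : 'I_n) :
  passmx.mxof e e F i j = coord e j (F e`_i).
Proof. by rewrite /passmx.mxof !mxE /= passmx.vecof_delta. Qed.


Lemma ord2 (i : 'I_n) : (i : nat) = 0%N \/ (i : nat) = 1%N.
Proof. have := ltn_ord i; rewrite [X in (_ < X)%N]dimPd; case: (i : nat) => [|[|k]] H; auto; by []. Qed.

Lemma coord_tup2 u0 u1 (fr : free (tup2 u0 u1)) (j : 'I_n) a b :
  coord (tup2 u0 u1) j (a *: u0 + b *: u1) = if (j : nat) == 0%N then a else b.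
Proof.
have n0 : (0 < n)%N by rewrite dimPd.
have n1 : (1 < n)%N by rewrite dimPd.
have c0 := coord_free (Ordinal n0) j fr.
have c1 := coord_free (Ordinal n1) j fr.
rewrite /= in c0 c1.
rewrite linearD !linearZ /= c0 c1 -!val_eqE /=.
by case: (ord2 j) => -> /=; rewrite ?mulr0 ?mulr1 ?addr0 ?add0r.
Qed.

Lemma mx_tup2 u0 u1 (fr : free (tup2 u0 u1)) (F : 'End(Pd R 1)) a00 a01 a10 a11 :
  F u0 = a00 *: u0 + a01 *: u1 -> F u1 = a10 *: u0 + a11 *: u1 ->
  forall i j : 'I_n, passmx.mxof (tup2 u0 u1) (tup2 u0 u1) F i j =
     if (i : nat) == 0%N then (if (j : nat) == 0%N then a00 else a01)
     else (if (j : nat) == 0%N then a10 else a11).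
Proof.
move=> h0 h1 i j; rewrite mxofE.
by case: (ord2 i) => -> /=; rewrite ?h0 ?h1 coord_tup2.
Qed.

Lemma irr2 (M : 'M[R]_n) a00 a01 a10 a11 :
  (forall i j : 'I_n, M i j = if (i : nat) == 0%N then (if (j : nat) == 0%N then a00 else a01)
     else (if (j : nat) == 0%N then a10 else a11)) ->
  a01 != 0 -> a10 != 0 -> irr_tridiag M.
Proof.
move=> hM h01 h10 i j; rewrite hM.
by case: (ord2 i) => ->; case: (ord2 j) => -> /=; split.
Qed.

Lemma diag2 (M : 'M[R]_n) a00 a01 a10 a11 :
  (forall i j : 'I_n, M i j = if (i : nat) == 0%N then (if (j : nat) == 0%N then a00 else a01)
     else (if (j : nat) == 0%N then a10 else a11)) ->
  a01 = 0 -> a10 = 0 -> is_diag_mx M.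
Proof.
move=> hM h01 h10; apply/is_diag_mxP => i j; rewrite hM.
by case: (ord2 i) => ->; case: (ord2 j) => -> /=.
Qed.


Variable lam : R.
Ltac evsimp := rewrite ?comp_lfunE ?add_lfunE ?scale_lfunE ?id_lfunE;
  rewrite ?(evD, evZ, evLs0, evLs1, evL0, evL1, ev_mkv0, ev_mkv1).

Lemma evM0 f : ev 0 ((Lsop r s 1 + lam *: \1)%VF f) = (1+s)/N * (ev 0 f - ev 1 f) + lam * ev 0 f.
Proof. by rewrite add_lfunE scale_lfunE id_lfunE evD evZ evLs0. Qed.
Lemma evM1 f : ev 1 ((Lsop r s 1 + lam *: \1)%VF f) = (1+r)/N * (ev 1 f - ev 0 f) + lam * ev 1 f.
Proof. by rewrite add_lfunE scale_lfunE id_lfunE evD evZ evLs1. Qed.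

Lemma main_lemma :
  leonard_pair (Lop r s 1) ((Lsop r s 1 + lam *: \1) \o (Lsop r s 1 + lam *: \1))%VF
  <-> 2 * lam != -1.
Proof.
have hN := N_neq0.
have h1r : 1 + r != 0 by rewrite gt_eqF //; move: hr => ?; lra.
have h1s : 1 + s != 0 by rewrite gt_eqF //; move: hs => ?; lra.
have n0 : (0 < n)%N by rewrite dimPd.
have n1 : (1 < n)%N by rewrite dimPd.
split.
  move=> [_ [[e [eb [_ hirr]]] _]]; apply/negP => /eqP h2.
  have hl : lam = -(1/2) by move: h2 => ?; lra.
  have hM2 : forall v, ((Lsop r s 1 + lam *: \1) \o (Lsop r s 1 + lam *: \1))%VF v = (1/4) *: v.
    by move=> v; apply: ev_inj; evsimp; rewrite hl; field.
  have := (hirr (Ordinal n0) (Ordinal n1)).2.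
  rewrite /= => /(_ isT).
  rewrite mxofE hM2 linearZ /=.
  have cf := coord_free (Ordinal n0) (Ordinal n1) (basis_free eb).
  rewrite /= in cf; rewrite cf.
  by rewrite mulr0 eqxx.
move=> h2.
have h2' : 1 + 2 * lam != 0.
  by apply: contra h2 => /eqP h; apply/eqP; move: h => ?; lra.
split; first by rewrite dimPd.
split.
  have eb : basis_of fullv (tup2 (mkv 1 0) (mkv 0 1)).
    by apply: basis2; rewrite !(ev_mkv0, ev_mkv1) mulr1 mulr0 subr0 oner_eq0.
  exists (tup2 (mkv 1 0) (mkv 0 1)); split => //.
  have fr := basis_free eb.
  split.
    apply: (@diag2 _ N 0 0 0); last by [].
      apply: mx_tup2 => //; apply: ev_inj;
        by evsimp; ring.
    by [].
  apply: (@irr2 _ ((1+s)/N * ((1+s)/N + (1+r)/N + lam) + lam * ((1+s)/N + lam))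
                  (-((1+r)/N) * (1 + 2 * lam))
                  (-((1+s)/N) * (1 + 2 * lam))
                  ((1+r)/N * ((1+r)/N + (1+s)/N + lam) + lam * ((1+r)/N + lam))).
  - apply: mx_tup2 => //; apply: ev_inj;
      by evsimp; field.
  - by rewrite mulf_neq0 // oppr_eq0 mulf_neq0 // invr_neq0.
  - by rewrite mulf_neq0 // oppr_eq0 mulf_neq0 // invr_neq0.
have eb : basis_of fullv (tup2 (mkv 1 1) (mkv (1+s) (-(1+r)))).
  apply: basis2; rewrite !(ev_mkv0, ev_mkv1) !mul1r.
  have -> : - (1 + r) - (1 + s) = - N by ring.
  by rewrite oppr_eq0.
exists (tup2 (mkv 1 1) (mkv (1+s) (-(1+r)))); split => //.
have fr := basis_free eb.
split.
  apply: (@diag2 _ (lam ^+ 2) 0 0 ((1 + lam) ^+ 2)); last by [].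
    apply: mx_tup2 => //; apply: ev_inj;
      by evsimp; field.
  by [].
apply: (@irr2 _ (1 + r) 1 ((1+s)*(1+r)) (1+s)).
- apply: mx_tup2 => //; apply: ev_inj;
    by evsimp; ring.
- exact: oner_neq0.
- by rewrite mulf_neq0.
Qed.

End S.

Theorem corollary2p10 (R : realType) (r s : R) (hr : -1 < r) (hs : -1 < s)
    (lam : R) :
  let d := 1%N in
  let M := (Lsop r s d + lam *: \1)%VF in
  leonard_pair (Lop r s d) (M \o M)%VF <-> 2 * lam != -1.
Proof. exact: (@main_lemma R r s hr hs lam). Qed.
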